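(* Let $L$ be the unnormalized Laplacian of a simple undirected network with $M$ edges, with simple eigenvalues $\lambda_1,\dots,\lambda_N$ and orthonormal eigenvectors $\bm v^{(1)},\dots,\bm v^{(N)}$. Suppose the network is modified by adding (resp. removing) an unweighted edge $(p,q)$, encoded by the Laplacian perturbation matrix $\Delta L^{(pq)}$ with $\Delta L^{(pq)}_{pp}=\Delta L^{(pq)}_{qq}=\pm1$, $\Delta L^{(pq)}_{pq}=\Delta L^{(pq)}_{qp}=\mp1$, and all other entries $0$ (upper sign for addition, lower sign for removal). Let $L(\epsilon)=L+\epsilon\,\Delta L^{(pq)}$, assume its eigenvalues $\lambda_i(\epsilon)$ are simple, and let $h(\epsilon)=-\sum_i\frac{\lambda_i(\epsilon)}{2M}\log_2\frac{\lambda_i(\epsilon)}{2M}$. Then $h(\epsilon)=h(0)+\epsilon h'(0)+\mathcal{O}(\epsilon^2)$ with $$h'(0)=-\frac{1}{2M}\sum_{i=1}^N\pm\left(\bm v^{(i)}_p-\bm v^{(i)}_q\right)^2\left(\log_2\frac{\lambda_i}{2M}+\frac{1}{\ln 2}\right),$$ where $\pm$ is $+$ for addition and $-$ for removal.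
   Context: For a simple undirected unweighted network with adjacency matrix $A$ and degree matrix $D$, the unnormalized Laplacian is $L=D-A$. The von Neumann entropy of a network with $M$ edges and Laplacian eigenvalues $\lambda_i$ is $-\sum_i\frac{\lambda_i}{2M}\log_2\frac{\lambda_i}{2M}$ with $0\log_2 0=0$. *)

(* Defs.v *)
From HB Require Import structures.
From mathcomp Require Import all_boot all_order all_algebra.
From mathcomp Require Import all_classical all_reals all_analysis.
Set Implicit Arguments. Unset Strict Implicit. Unset Printing Implicit Defensive.
Import Order.TTheory GRing.Theory Num.Theory.
Local Open Scope ring_scope.

Definition simple_graph (N : nat) (adj : rel 'I_N) : Prop :=
  symmetric adj /\ irreflexive adj.

Definition vdegree (N : nat) (adj : rel 'I_N) (i : 'I_N) : nat :=
  #|[set j | adj i j]|.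

Definition num_edges (N : nat) (adj : rel 'I_N) : nat :=
  #|[set e : 'I_N * 'I_N | adj e.1 e.2 && (e.1 < e.2)%N]|.

Definition laplacian (R : realType) (N : nat) (adj : rel 'I_N) : 'M[R]_N :=
  \matrix_(i, j) ((i == j)%:R * (vdegree adj i)%:R - (adj i j)%:R).

Definition edge_pert (R : realType) (N : nat) (add : bool) (p q : 'I_N) : 'M[R]_N :=
  let s : R := if add then 1 else -1 in
  \matrix_(i, j)
    (if i == j then (if (i == p) || (i == q) then s else 0)
     else if ((i == p) && (j == q)) || ((i == q) && (j == p)) then - s else 0).

Definition log2 (R : realType) (x : R) : R := ln x / ln 2.

Definition xlog2x (R : realType) (x : R) : R := if x == 0 then 0 else x * log2 x.

Definition vn_entropy (R : realType) (N M : nat) (lam : 'I_N -> R) : R :=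
  - \sum_(i < N) xlog2x (lam i / (2 * M%:R)).

(* Main.v *)
Require Import Defs.
From HB Require Import structures.
From mathcomp Require Import all_boot all_order all_algebra.
From mathcomp Require Import all_classical all_reals all_analysis.
From mathcomp Require Import ring lra.
Import Order.TTheory GRing.Theory Num.Theory.
Local Open Scope ring_scope.
Set Implicit Arguments. Unset Strict Implicit.


Definition dotv (R : realType) (N : nat) (x y : 'I_N -> R) : R := \sum_k x k * y k.
Definition appm (R : realType) (N : nat) (A : 'I_N -> 'I_N -> R) (x : 'I_N -> R) : 'I_N -> R :=
  fun k => \sum_l A k l * x l.

Lemma argmin_ex (R : realType) (T : finType) (x0 : T) (F : T -> R) :
  exists j, forall j', F j <= F j'.
Proof.
case: (@arg_minP _ R T x0 xpredT F erefl) => j _ Hj.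
by exists j => j'; apply: Hj.
Qed.

Lemma posmin_ex (R : realType) (T : finType) (x0 : T) (F : T -> R) :
  (forall x, 0 < F x) -> exists2 g, 0 < g & forall x, g <= F x.
Proof.
move=> Hp; case: (argmin_ex x0 F) => j Hj; by exists (F j).
Qed.

Lemma sum_delta (R : realType) N (F : 'I_N -> R) k : \sum_l F l * (k == l)%:R = F k.
Proof.
rewrite (bigD1 k) //= eqxx mulr1 big1 ?addr0 // => l /negbTE.
by rewrite eq_sym => ->; rewrite mulr0.
Qed.

Lemma complete_gen (R : realType) N (u : 'I_N -> 'I_N -> R) (n : 'I_N -> R) :
  (forall j, n j != 0) -> (forall j j', dotv (u j) (u j') = (j == j')%:R * n j) ->
  forall k l, \sum_j u j k * u j l / n j = (k == l)%:R.
Proof.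
move=> nz orth k l.
pose A : 'M[R]_N := \matrix_(j, k) (u j k / n j).
pose B : 'M[R]_N := \matrix_(k, j) u j k.
have AB : A *m B = 1%:M.
  apply/matrixP => j j'; rewrite !mxE.
  transitivity ((j == j')%:R * n j / n j); last by rewrite mulfK.
  rewrite -orth /dotv mulr_suml; apply: eq_bigr => m _; rewrite !mxE.
  by rewrite mulrAC.
have := mulmx1C AB => /matrixP /(_ k l); rewrite !mxE => <-.
by apply: eq_bigr => j _; rewrite !mxE mulrA.
Qed.

Lemma recon (R : realType) N (u : 'I_N -> 'I_N -> R) (n : 'I_N -> R) :
  (forall j, n j != 0) -> (forall j j', dotv (u j) (u j') = (j == j')%:R * n j) ->
  forall y k, y k = \sum_j (dotv (u j) y / n j) * u j k.
Proof.
move=> nz orth y k.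
have C := complete_gen nz orth.
transitivity (\sum_l y l * \sum_j u j k * u j l / n j).
  rewrite (eq_bigr (fun l => y l * (k == l)%:R)) ?sum_delta // => l _.
  by rewrite C.
rewrite /dotv; under eq_bigr do rewrite mulr_sumr.
rewrite exchange_big; apply: eq_bigr => j _.
rewrite !mulr_suml; apply: eq_bigr => l _; ring.
Qed.

Lemma parseval_gen (R : realType) N (u : 'I_N -> 'I_N -> R) (n : 'I_N -> R) :
  (forall j, n j != 0) -> (forall j j', dotv (u j) (u j') = (j == j')%:R * n j) ->
  forall y z, dotv y z = \sum_j dotv (u j) y * dotv (u j) z / n j.
Proof.
move=> nz orth y z.
rewrite {1}/dotv; under eq_bigr do rewrite (recon nz orth y) mulr_suml.
rewrite exchange_big; apply: eq_bigr => j _ /=.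
rewrite mulrAC /dotv mulr_suml mulr_sumr; apply: eq_bigr => k _.
ring.
Qed.

Lemma dot_sym_app (R : realType) N (A : 'I_N -> 'I_N -> R) :
  (forall k l, A k l = A l k) ->
  forall x y, dotv x (appm A y) = dotv (appm A x) y.
Proof.
move=> Asym x y; rewrite /dotv /appm.
under eq_bigr do rewrite mulr_sumr.
under [RHS]eq_bigr do rewrite mulr_suml.
rewrite exchange_big; apply: eq_bigr => l _; apply: eq_bigr => k _.
rewrite Asym; ring.
Qed.

Lemma dot_ge0 (R : realType) N (y : 'I_N -> R) : 0 <= dotv y y.
Proof. by apply: sumr_ge0 => k _; rewrite -expr2 sqr_ge0. Qed.

Lemma dot_gt0 (R : realType) N (y : 'I_N -> R) k : y k != 0 -> 0 < dotv y y.
Proof.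
move=> yk; rewrite /dotv (bigD1 k) //=.
apply: ltr_pwDl; first by rewrite -expr2 exprn_even_gt0.
by apply: sumr_ge0 => l _; rewrite -expr2 sqr_ge0.
Qed.

Lemma eig_orth (R : realType) N (A : 'I_N -> 'I_N -> R) (Asym : forall k l, A k l = A l k)
  (al : 'I_N -> R) (u : 'I_N -> 'I_N -> R)
  (eig : forall j l, appm A (u j) l = al j * u j l) j j' :
  al j != al j' -> dotv (u j) (u j') = 0.
Proof.
move=> H.
have E : al j * dotv (u j) (u j') = al j' * dotv (u j) (u j').
  transitivity (dotv (appm A (u j)) (u j')).
    by rewrite /dotv mulr_sumr; apply: eq_bigr => l _; rewrite eig mulrA.
  rewrite -dot_sym_app // /dotv mulr_sumr; apply: eq_bigr => l _; rewrite eig; ring.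
move/eqP: E; rewrite -subr_eq0 -mulrBl mulf_eq0 subr_eq0 (negbTE H) /=.
by move/eqP.
Qed.

Lemma dotBr (R : realType) N (x y : 'I_N -> R) (c : R) (z : 'I_N -> R) :
  dotv x (fun k => y k - c * z k) = dotv x y - c * dotv x z.
Proof.
rewrite /dotv mulr_sumr -sumrB; apply: eq_bigr => k _; ring.
Qed.

Lemma near_eig (R : realType) N (A : 'I_N -> 'I_N -> R) (Asym : forall k l, A k l = A l k)
  (al : 'I_N -> R) (alinj : injective al) (u : 'I_N -> 'I_N -> R)
  (eig : forall j l, appm A (u j) l = al j * u j l)
  (unz : forall j, exists k, u j k != 0) (j0 : 'I_N) (x : 'I_N -> R) (mu : R) :
  exists j, (al j - mu) ^+ 2 * dotv x x <=
     dotv (fun k => appm A x k - mu * x k) (fun k => appm A x k - mu * x k).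
Proof.
pose n := fun j => dotv (u j) (u j).
have npos : forall j, 0 < n j.
  by move=> j; case: (unz j) => k Hk; apply: (dot_gt0 Hk).
have nz : forall j, n j != 0 by move=> j; rewrite gt_eqF.
have orth : forall j j', dotv (u j) (u j') = (j == j')%:R * n j.
  move=> j j'; case: (eqVneq j j') => [->|ne]; first by rewrite mul1r.
  rewrite mul0r; apply: (eig_orth Asym eig).
  by rewrite (inj_eq alinj).
have P := parseval_gen nz orth.
case: (argmin_ex j0 (fun j => (al j - mu) ^+ 2)) => j Hj; exists j.
rewrite (P x x) (P (fun k => appm A x k - mu * x k)) mulr_sumr.
apply: ler_sum => i _.
have -> : dotv (u i) (fun k => appm A x k - mu * x k) = (al i - mu) * dotv (u i) x.
  rewrite dotBr dot_sym_app // mulrBl; congr (_ - _).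
  by rewrite /dotv mulr_sumr; apply: eq_bigr => l _; rewrite eig mulrA.
have -> : (al i - mu) * dotv (u i) x * ((al i - mu) * dotv (u i) x) / n i
   = (al i - mu) ^+ 2 * (dotv (u i) x * dotv (u i) x / n i) by ring.
apply: ler_wpM2r; last exact: Hj.
by apply: divr_ge0; [rewrite -expr2 sqr_ge0 | apply: ltW].
Qed.


Lemma appm_sum (R : realType) N (A : 'I_N -> 'I_N -> R) (P : pred 'I_N) (c : 'I_N -> R)
  (y : 'I_N -> 'I_N -> R) k :
  appm A (fun l => \sum_(j | P j) c j * y j l) k = \sum_(j | P j) c j * appm A (y j) k.
Proof.
rewrite /appm; under eq_bigr do rewrite mulr_sumr.
rewrite exchange_big; apply: eq_bigr => j _; rewrite mulr_sumr.
by apply: eq_bigr => l _; ring.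
Qed.

Lemma dot_sum (R : realType) N (x : 'I_N -> R) (P : pred 'I_N) (c : 'I_N -> R)
  (y : 'I_N -> 'I_N -> R) :
  dotv x (fun l => \sum_(j | P j) c j * y j l) = \sum_(j | P j) c j * dotv x (y j).
Proof.
rewrite /dotv; under eq_bigr do rewrite mulr_sumr.
rewrite exchange_big; apply: eq_bigr => j _; rewrite mulr_sumr.
by apply: eq_bigr => l _; ring.
Qed.

Lemma appm_lin (R : realType) N (L D : 'I_N -> 'I_N -> R) (e : R) (y z : 'I_N -> R) k :
  appm (fun k l => L k l + e * D k l) (fun l => y l + e * z l) k =
  appm L y k + e * appm L z k + e * appm D y k + e ^+ 2 * appm D z k.
Proof.
rewrite /appm !mulr_sumr -!big_split; apply: eq_bigr => l _ /=; ring.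
Qed.

Lemma dot_lin (R : realType) N (e : R) (y z : 'I_N -> R) :
  dotv (fun l => y l + e * z l) (fun l => y l + e * z l) =
  dotv y y + 2 * e * dotv y z + e ^+ 2 * dotv z z.
Proof.
rewrite /dotv !mulr_sumr -!big_split; apply: eq_bigr => l _ /=; ring.
Qed.

Lemma sq_abs_le (R : realType) (a b : R) : 0 <= b -> a ^+ 2 <= b ^+ 2 -> `|a| <= b.
Proof.
move=> b0 H; rewrite -(@ler_pXn2r _ 2) // ?inE ?normr_ge0 //.
by rewrite real_normK // num_real.
Qed.

Lemma pert_bound (R : realType) N (L D : 'I_N -> 'I_N -> R)
  (Lsym : forall k l, L k l = L l k) (Dsym : forall k l, D k l = D l k)
  (lam : 'I_N -> R) (laminj : injective lam) (v : 'I_N -> 'I_N -> R)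
  (veig : forall i k, appm L (v i) k = lam i * v i k)
  (vorth : forall i j, dotv (v i) (v j) = (i == j)%:R) (j0 : 'I_N) :
  exists2 K, 0 <= K & forall (eps : R) (al : 'I_N -> R), injective al ->
    forall u : 'I_N -> 'I_N -> R,
    (forall j l, appm (fun k l => L k l + eps * D k l) (u j) l = al j * u j l) ->
    (forall j, exists k, u j k != 0) ->
    forall i, exists j, `|al j - (lam i + eps * dotv (v i) (appm D (v i)))| <= K * eps ^+ 2.
Proof.
pose b i j := dotv (v j) (appm D (v i)).
pose w i k := \sum_(j | j != i) (b i j / (lam i - lam j)) * v j k.
pose r2 i k := appm D (w i) k - b i i * w i k.
pose K0 := \sum_i dotv (r2 i) (r2 i).
have K0ge : 0 <= K0 by apply: sumr_ge0 => i _; apply: dot_ge0.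
exists (K0 + 1); first by rewrite addr_ge0.
move=> eps al alinj u eig unz i.
pose A := fun k l => L k l + eps * D k l.
have Asym : forall k l, A k l = A l k by move=> k l; rewrite /A Lsym Dsym.
pose x k := v i k + eps * w i k.
pose mu := lam i + eps * b i i.
case: (near_eig Asym alinj eig unz j0 x mu) => j Hj.
exists j; rewrite -/(b i i) -/mu.
have orth1 : forall i j, dotv (v i) (v j) = (i == j)%:R * 1.
  by move=> ? ?; rewrite mulr1.
have n1 : forall j : 'I_N, (1 : R) != 0 by move=> _; exact: oner_neq0.
have rec := recon n1 orth1.
have res : forall k, appm A x k - mu * x k = eps ^+ 2 * r2 i k.
  move=> k; rewrite /A /x appm_lin /r2 /mu.
  have E1 : appm L (w i) k = \sum_(j | j != i) (b i j / (lam i - lam j)) * (lam j * v j k).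
    by rewrite /w appm_sum; apply: eq_bigr => j' _; rewrite veig.
  have E2 : appm D (v i) k = b i i * v i k + \sum_(j | j != i) b i j * v j k.
    rewrite {1}(rec (appm D (v i)) k) (bigD1 i) //= divr1; congr (_ + _).
    by apply: eq_bigr => j' _; rewrite divr1.
  have Z : \sum_(j | j != i) b i j * v j k =
           lam i * w i k - \sum_(j | j != i) (b i j / (lam i - lam j)) * (lam j * v j k).
    rewrite /w mulr_sumr -sumrB; apply: eq_bigr => j' ne.
    have ne' : lam i - lam j' != 0 by rewrite subr_eq0 (inj_eq laminj) eq_sym.
    by field.
  rewrite E1 E2 Z veig; ring.
have xx : 1 <= dotv x x.
  rewrite /x dot_lin vorth eqxx.
  have -> : dotv (v i) (w i) = 0.
    rewrite /w dot_sum big1 // => j' ne; rewrite vorth eq_sym (negbTE ne) mulr0 //.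
  rewrite mulr0 addr0 lerDl mulr_ge0 ?dot_ge0 //.
  by rewrite sqr_ge0.
have rr : dotv (fun k => appm A x k - mu * x k) (fun k => appm A x k - mu * x k)
     = eps ^+ 4 * dotv (r2 i) (r2 i).
  rewrite /dotv mulr_sumr; apply: eq_bigr => k _; rewrite res; ring.
have r2le : dotv (r2 i) (r2 i) <= K0.
  rewrite /K0 (bigD1 i) //= lerDl; apply: sumr_ge0 => i' _; apply: dot_ge0.
apply: sq_abs_le; first by rewrite mulr_ge0 // ?addr_ge0 // sqr_ge0.
have sqge : 0 <= (al j - mu) ^+ 2 by rewrite sqr_ge0.
apply: (le_trans (ler_peMr sqge xx)); apply: (le_trans Hj); rewrite rr.
have e4 : 0 <= eps ^+ 4 by rewrite (_ : 4 = 2 * 2)%N // exprM sqr_ge0.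
apply: (le_trans (ler_wpM2l e4 r2le)).
have -> : ((K0 + 1) * eps ^+ 2) ^+ 2 = eps ^+ 4 * (K0 + 1) ^+ 2 by ring.
apply: ler_wpM2l => //; clear -K0ge; move: K0ge; move: K0 => t ht; nra.
Qed.


Lemma deg_sum (R : realType) N (adj : rel 'I_N) k :
  (vdegree adj k)%:R = \sum_l (adj k l)%:R :> R.
Proof.
rewrite /vdegree -sum1_card natr_sum big_mkcond /=.
by apply: eq_bigr => l _; rewrite inE; case: (adj k l).
Qed.

Lemma lap_sym (R : realType) N (adj : rel 'I_N) : symmetric adj ->
  forall k l, laplacian R adj k l = laplacian R adj l k.
Proof.
move=> sy k l; rewrite !mxE; case: (eqVneq k l) => [->//|ne].
by rewrite sy /= !mul0r.
Qed.

Lemma lap_app (R : realType) N (adj : rel 'I_N) (y : 'I_N -> R) k :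
  appm (fun k l => laplacian R adj k l) y k = \sum_l (adj k l)%:R * (y k - y l).
Proof.
rewrite /appm.
transitivity (\sum_l ((vdegree adj k)%:R * y l * (k == l)%:R - (adj k l)%:R * y l)).
  by apply: eq_bigr => l _; rewrite mxE; ring.
rewrite sumrB sum_delta deg_sum mulr_suml -sumrB.
by apply: eq_bigr => l _; ring.
Qed.

Lemma lap_psd (R : realType) N (adj : rel 'I_N) : symmetric adj ->
  forall y : 'I_N -> R, 0 <= dotv y (appm (fun k l => laplacian R adj k l) y).
Proof.
move=> sy y.
pose a k l : R := (adj k l)%:R.
have E : dotv y (appm (fun k l => laplacian R adj k l) y) =
         \sum_k \sum_l a k l * (y k * y k - y k * y l).
  rewrite /dotv; apply: eq_bigr => k _; rewrite lap_app mulr_sumr.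
  by apply: eq_bigr => l _; rewrite /a; ring.
have E2 : \sum_k \sum_l a k l * (y k * y k - y k * y l) =
          \sum_k \sum_l a k l * (y l * y l - y l * y k).
  rewrite exchange_big; apply: eq_bigr => k _; apply: eq_bigr => l _.
  by rewrite /a sy.
have S : 0 <= \sum_k \sum_l a k l * (y k * y k - y k * y l) +
              \sum_k \sum_l a k l * (y l * y l - y l * y k).
  rewrite -big_split; apply: sumr_ge0 => k _ /=; rewrite -big_split.
  apply: sumr_ge0 => l _ /=.
  have -> : a k l * (y k * y k - y k * y l) + a k l * (y l * y l - y l * y k)
     = a k l * (y k - y l) ^+ 2 by ring.
  by rewrite mulr_ge0 ?sqr_ge0 // /a ler0n.
rewrite E; rewrite -E2 in S; move: S; move: (\sum_k _) => t; lra.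
Qed.

Lemma lap_ones (R : realType) N (adj : rel 'I_N) k :
  appm (fun k l => laplacian R adj k l) (fun _ => 1) k = 0.
Proof. by rewrite lap_app big1 // => l _; rewrite subrr mulr0. Qed.

Definition evec (R : realType) N (p q : 'I_N) (k : 'I_N) : R := (k == p)%:R - (k == q)%:R.

Lemma pert_entry (R : realType) N (add : bool) (p q : 'I_N) : p != q ->
  forall k l, edge_pert R add p q k l =
     (if add then 1 else -1) * evec R p q k * evec R p q l.
Proof.
move=> pq k l; rewrite mxE /evec.
case: (eqVneq k p) => [?|kp]; case: (eqVneq l p) => [?|lp];
case: (eqVneq k q) => [?|kq]; case: (eqVneq l q) => [?|lq]; subst;
  try (by move: pq; rewrite eqxx);
  rewrite ?eqxx ?(negbTE pq) ?(negbTE kp) ?(negbTE lp) ?(negbTE kq) ?(negbTE lq) /=;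
  try (rewrite eq_sym ?(negbTE pq) ?(negbTE kp) ?(negbTE lp) ?(negbTE kq) ?(negbTE lq) /=);
  case: add => /=; try ring.
all: by case: (l == k); ring.
Qed.

Lemma dot_evec (R : realType) N (p q : 'I_N) (y : 'I_N -> R) :
  \sum_l evec R p q l * y l = y p - y q.
Proof.
rewrite /evec; under eq_bigr do rewrite mulrBl.
rewrite sumrB; congr (_ - _).
  by rewrite -(sum_delta y p); apply: eq_bigr => l _; rewrite eq_sym mulrC.
by rewrite -(sum_delta y q); apply: eq_bigr => l _; rewrite eq_sym mulrC.
Qed.

Lemma pert_app (R : realType) N (add : bool) (p q : 'I_N) : p != q ->
  forall (y : 'I_N -> R) k, appm (fun k l => edge_pert R add p q k l) y k =
     (if add then 1 else -1) * evec R p q k * (y p - y q).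
Proof.
move=> pq y k; rewrite /appm -dot_evec mulr_sumr; apply: eq_bigr => l _.
by rewrite pert_entry // mulrA.
Qed.

Lemma pert_sym (R : realType) N (add : bool) (p q : 'I_N) : p != q ->
  forall k l, edge_pert R add p q k l = edge_pert R add p q l k.
Proof. by move=> pq k l; rewrite !pert_entry //; ring. Qed.

Lemma pert_quad (R : realType) N (add : bool) (p q : 'I_N) : p != q ->
  forall (y : 'I_N -> R), dotv y (appm (fun k l => edge_pert R add p q k l) y) =
     (if add then 1 else -1) * (y p - y q) ^+ 2.
Proof.
move=> pq y; rewrite /dotv.
under eq_bigr do rewrite pert_app //.
transitivity ((if add then 1 else -1) * (y p - y q) * \sum_k evec R p q k * y k).
  by rewrite mulr_sumr; apply: eq_bigr => k _; ring.
by rewrite dot_evec; ring.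
Qed.

Lemma pert_ones (R : realType) N (add : bool) (p q : 'I_N) : p != q ->
  forall k, appm (fun k l => edge_pert R add p q k l) (fun _ => 1 : R) k = 0.
Proof. by move=> pq k; rewrite pert_app // subrr mulr0. Qed.


Lemma ln_le_sub1 (R : realType) (t : R) : 0 < t -> ln t <= t - 1.
Proof.
move=> t0; have := expR_ge1Dx (ln t); rewrite lnK ?posrE //.
move: (ln t) => z; lra.
Qed.

Lemma xlnx_taylor (R : realType) (a l : R) : 0 < a -> 0 < l ->
  0 <= a * ln a - l * ln l - (a - l) * (ln l + 1) <= (a - l) ^+ 2 / l.
Proof.
move=> a0 l0.
have al0 : 0 < a / l by rewrite divr_gt0.
have la0 : 0 < l / a by rewrite divr_gt0.
have E : ln a = ln l + ln (a / l) by rewrite ln_div ?posrE //; ring.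
have E' : ln (l / a) = - ln (a / l) by rewrite !ln_div ?posrE //; ring.
have U := ln_le_sub1 al0.
have L := ln_le_sub1 la0; rewrite E' in L.
rewrite E.
have -> : a * (ln l + ln (a / l)) - l * ln l - (a - l) * (ln l + 1)
   = a * ln (a / l) - (a - l) by ring.
apply/andP; split.
  have : a * (1 - l / a) <= a * ln (a / l) by rewrite ler_pM2l //; lra.
  have -> : a * (1 - l / a) = a - l by field; rewrite gt_eqF.
  lra.
have : a * ln (a / l) <= a * (a / l - 1) by rewrite ler_pM2l //; lra.
have -> : a * (a / l - 1) = (a - l) + (a - l) ^+ 2 / l by field; rewrite gt_eqF.
lra.
Qed.

Lemma xlog2xE (R : realType) (x : R) : xlog2x x = x * ln x / ln 2.
Proof.
by rewrite /xlog2x /log2; case: eqP => [->|_]; rewrite ?mul0r // mulrA.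
Qed.

Lemma term_bound (R : realType) (c lam al eps dl K D : R) :
  0 < c -> 0 < lam -> 0 < al -> 0 <= K ->
  `|al - (lam + eps * dl)| <= K * eps ^+ 2 -> `|al - lam| <= D * `|eps| ->
  `|xlog2x (al / c) - xlog2x (lam / c) - eps * (c^-1 * (dl * (log2 (lam / c) + (ln (2:R))^-1)))|
     <= ((D ^+ 2 / (c * lam) + K * `|ln (lam / c) + 1| / c) / ln 2) * eps ^+ 2.
Proof.
move=> c0 l0 a0 K0 HE HD.
have ln2 : 0 < ln (2:R) by apply: ln_gt0; lra.
have a0' : 0 < al / c by rewrite divr_gt0.
have l0' : 0 < lam / c by rewrite divr_gt0.
have T := xlnx_taylor a0' l0'.
set T0 := _ - _ - _ in T.
set E := al - (lam + eps * dl) in HE.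
set Z := E / c * (ln (lam / c) + 1).
have key : xlog2x (al / c) - xlog2x (lam / c) - eps * (c^-1 * (dl * (log2 (lam / c) + (ln (2:R))^-1)))
    = (T0 + Z) / ln 2.
  rewrite !xlog2xE /log2 /T0 /Z /E; field.
  by rewrite !gt_eqF.
rewrite key normrM (gtr0_norm (x := (ln (2:R))^-1) ltac:(by rewrite invr_gt0)) mulrAC.
rewrite ler_pM2r ?invr_gt0 //.
apply: (le_trans (ler_normD _ _)).
have T1 : `|T0| <= D ^+ 2 / (c * lam) * eps ^+ 2.
  case/andP: T => T1 T2; rewrite ger0_norm //; apply: (le_trans T2).
  have -> : (al / c - lam / c) ^+ 2 / (lam / c) = (al - lam) ^+ 2 / (c * lam).
    by field; rewrite !gt_eqF.
  rewrite [X in _ <= X]mulrAC ler_pM2r ?invr_gt0 ?mulr_gt0 //.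
  have n0 := normr_ge0 (al - lam).
  have -> : (al - lam) ^+ 2 = `|al - lam| ^+ 2 by rewrite real_normK // num_real.
  have -> : D ^+ 2 * eps ^+ 2 = (D * `|eps|) ^+ 2.
    by rewrite exprMn real_normK // num_real.
  move: HD n0; move: (`|al - lam|) (D * `|eps|) => x y; nra.
have Z1 : `|Z| <= K * `|ln (lam / c) + 1| / c * eps ^+ 2.
  rewrite /Z !normrM (gtr0_norm (x := c^-1) ltac:(by rewrite invr_gt0)).
  set Y := `|ln (lam / c) + 1|.
  have -> : K * Y / c * eps ^+ 2 = K * eps ^+ 2 * c^-1 * Y by ring.
  rewrite ler_wpM2r ?normr_ge0 // ler_wpM2r //.
  by rewrite invr_ge0 ltW.
rewrite mulrDl; exact: lerD.
Qed.

Lemma R_close (R : realType) (e a l dl K D : R) : `|e| <= 1 -> 0 <= K ->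
  `|a - (l + e * dl)| <= K * e ^+ 2 -> `|dl| + K <= D -> `|a - l| <= D * `|e|.
Proof.
move=> e1 K0 H HD.
have : `|a - l| <= `|a - (l + e * dl)| + `|e * dl|.
  by rewrite (_ : a - l = (a - (l + e * dl)) + e * dl); [apply: ler_normD | ring].
rewrite normrM.
have E2 : e ^+ 2 = `|e| ^+ 2 by rewrite real_normK // num_real.
rewrite E2 in H.
have := normr_ge0 e; have := normr_ge0 dl.
move: H HD e1; move: `|e| `|dl| `|a - (l + e * dl)| `|a - l| => x y z w.
move=> H HD e1 y0 x0 Hw.
have x2 : x ^+ 2 <= x by nra.
have Kx : K * x ^+ 2 <= K * x by rewrite ler_wpM2l.
have xD : x * (y + K) <= x * D by rewrite ler_wpM2l.
nra.
Qed.

Lemma R_dpos (R : realType) (d0 g D : R) : 0 < d0 -> 0 < g -> 0 <= D ->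
  0 < Num.min (Num.min d0 1) (g / (2 * D + 1)).
Proof.
move=> d0p gp D0; rewrite !lt_min d0p ltr01 /= divr_gt0 //; lra.
Qed.

Lemma R_dprop (R : realType) (d0 g D e : R) : 0 < g -> 0 <= D ->
  `|e| < Num.min (Num.min d0 1) (g / (2 * D + 1)) ->
  [/\ `|e| < d0, `|e| <= 1 & D * `|e| + D * `|e| < g].
Proof.
move=> gp D0; rewrite !lt_min => /andP [/andP [h0 h1] h2]; split => //.
  exact: ltW.
have p21 : 0 < 2 * D + 1 by lra.
rewrite ltr_pdivlMr // in h2.
have := normr_ge0 e; move: h2; move: `|e| => x; nra.
Qed.

Lemma R_sq0 (R : realType) (x n : R) : 0 < n -> (x - 0) ^+ 2 * n <= 0 -> x = 0.
Proof.
move=> n0; rewrite subr0 => H.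
have H2 : x ^+ 2 <= 0.
  have : x ^+ 2 * n <= 0 * n by rewrite mul0r.
  by rewrite ler_pM2r.
by apply/eqP; rewrite -sqrf_eq0 eq_le H2 sqr_ge0.
Qed.

Lemma R_pos (R : realType) (a l x : R) : `|a - l| <= x -> x < l -> 0 < a.
Proof.
move=> H1 H2; move: H1; rewrite ler_norml => /andP [H3 H4]; lra.
Qed.

Lemma R_alg (R : realType) (a b e ci y : R) :
  - a - - b - e * (- ci * y) = - (a - b - e * (ci * y)).
Proof. ring. Qed.


Lemma zero_vec (R : realType) N (adj : rel 'I_N) (lam : 'I_N -> R) (v : 'I_N -> 'I_N -> R) :
  symmetric adj -> injective lam ->
  (forall i k, appm (fun k l => laplacian R adj k l) (v i) k = lam i * v i k) ->
  (forall i j, dotv (v i) (v j) = (i == j)%:R) ->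
  forall i0, lam i0 = 0 -> forall p q, v i0 p = v i0 q.
Proof.
move=> sy laminj veig vorth i0 l0 p q.
have orth1 : forall i j, dotv (v i) (v j) = (i == j)%:R * 1.
  by move=> ? ?; rewrite mulr1.
have n1 : forall j : 'I_N, (1 : R) != 0 by move=> _; exact: oner_neq0.
have rec := recon n1 orth1.
pose one := fun _ : 'I_N => 1 : R.
have Z : forall j, j != i0 -> dotv (v j) one = 0.
  move=> j ne.
  have E : lam j * dotv (v j) one = 0.
    transitivity (dotv (appm (fun k l => laplacian R adj k l) (v j)) one).
      by rewrite /dotv mulr_sumr; apply: eq_bigr => k _; rewrite veig mulrA.
    rewrite -dot_sym_app; last by apply: lap_sym.
    by rewrite /dotv big1 // => k _; rewrite lap_ones mulr0.
  move/eqP: E; rewrite mulf_eq0 => /orP [|/eqP //].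
  by rewrite -l0 (inj_eq laminj) (negbTE ne).
have V : forall k, 1 = dotv (v i0) one * v i0 k.
  move=> k; rewrite {1}(_ : 1 = one k) // (rec one k) (bigD1 i0) //= divr1.
  by rewrite big1 ?addr0 // => j ne; rewrite Z // mul0r mul0r.
have Vp := V p; have Vq := V q.
have nz : dotv (v i0) one != 0.
  by apply/eqP => H; rewrite H mul0r in Vp; move/eqP: Vp; rewrite oner_eq0.
apply: (mulfI nz); by rewrite -Vp -Vq.
Qed.

Unset Implicit Arguments. Set Strict Implicit.


Theorem corollary3p13 (R : realType) (N : nat) (adj : rel 'I_N)
    (lam : 'I_N -> R) (v : 'I_N -> 'I_N -> R) (add : bool) (p q : 'I_N)
    (lamE : R -> 'I_N -> R) :
  simple_graph adj ->
  (* simple eigenvalues lam i with orthonormal eigenvectors v i (components v i k) *)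
  injective lam ->
  (forall i k, \sum_(j < N) laplacian R adj k j * v i j = lam i * v i k) ->
  (forall i j, \sum_(k < N) v i k * v j k = (i == j)%:R) ->
  (* adding a non-edge, or removing an existing edge, (p,q) *)
  p != q ->
  (if add then ~~ adj p q else adj p q) ->
  (* lamE eps i : the eigenvalues of L(eps) = L + eps dL, all simple, for eps near 0 *)
  (exists2 d0 : R, 0 < d0 & forall eps : R, `|eps| < d0 ->
     injective (lamE eps) /\
     forall i, eigenvalue (laplacian R adj + eps *: edge_pert R add p q) (lamE eps i)) ->
  let M := num_edges adj in
  let h := fun eps : R => vn_entropy M (lamE eps) in
  let s : R := if add then 1 else -1 in
  let h'0 := - (2 * M%:R)^-1 *
       \sum_(i < N) s * (v i p - v i q) ^+ 2 *
                    (log2 (lam i / (2 * M%:R)) + (ln (2 : R))^-1) in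
  exists C : R, exists2 d : R, 0 < d & forall eps : R, `|eps| < d ->
    `|h eps - h 0 - eps * h'0| <= C * eps ^+ 2.
Proof.
move=> [sy _] laminj veig vorth pq _ [d0 d0pos Hd0] M h s h'0.
pose Lf : 'I_N -> 'I_N -> R := fun k l => laplacian R adj k l.
pose Df : 'I_N -> 'I_N -> R := fun k l => edge_pert R add p q k l.
have veig' : forall i k, appm Lf (v i) k = lam i * v i k by exact: veig.
have vorth' : forall i j, dotv (v i) (v j) = (i == j)%:R by exact: vorth.
have Lsym : forall k l, Lf k l = Lf l k by apply: lap_sym.
have Dsym : forall k l, Df k l = Df l k by apply: pert_sym.
pose c : R := 2 * M%:R.
case: (eqVneq M 0%N) => [M0|Mpos].
  have hz : forall e, h e = 0.
    move=> e; rewrite /h /vn_entropy M0 mulr0 big1 ?oppr0 // => i _.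
    by rewrite invr0 mulr0 /xlog2x eqxx.
  exists 0, 1 => // eps _.
  by rewrite !hz /h'0 M0 mulr0 invr0 oppr0 !mul0r mulr0 !subr0 addr0 normr0.
have c0 : 0 < c by rewrite /c mulr_gt0 // ltr0n lt0n.
have ln2 : 0 < ln (2:R) by apply: ln_gt0; lra.
case: (@pert_bound R N Lf Df Lsym Dsym lam laminj v veig' vorth' p) => K K0 HK.
pose dl i := dotv (v i) (appm Df (v i)).
have dlE : forall i, dl i = s * (v i p - v i q) ^+ 2 by move=> i; apply: pert_quad.
have lam0 : forall i, 0 <= lam i.
  move=> i; have := @lap_psd R N adj sy (v i).
  rewrite (_ : dotv _ _ = lam i) //.
  transitivity (lam i * dotv (v i) (v i)); last by rewrite vorth' eqxx mulr1.
  by rewrite /dotv mulr_sumr; apply: eq_bigr => k _; rewrite -/Lf veig' mulrCA.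
pose Dm := \sum_i `|dl i| + K.
have Dm0 : 0 <= Dm by rewrite addr_ge0 // sumr_ge0.
have dlDm : forall i, `|dl i| + K <= Dm.
  by move=> i; rewrite lerD2r /Dm (bigD1 i) //= lerDl sumr_ge0.
pose F1 := fun ii : 'I_N * 'I_N =>
          if ii.1 != ii.2 then `|lam ii.1 - lam ii.2| else 1.
have F1pos : forall ii, 0 < F1 ii.
  move=> [i i']; rewrite /F1 /=.
  by case: eqVneq => [//|ne] /=; rewrite normr_gt0 subr_eq0 (inj_eq laminj).
have [g1 g1pos Hg1] := @posmin_ex R _ (p, p) F1 F1pos.
pose F2 := fun i => if lam i == 0 then 1 else lam i.
have F2pos : forall i, 0 < F2 i.
  move=> i; rewrite /F2.
  by case: eqVneq => // ne; rewrite lt_neqAle eq_sym ne lam0.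
have [g2 g2pos Hg2] := @posmin_ex R _ p F2 F2pos.
pose g := Num.min g1 g2.
have gpos : 0 < g by rewrite lt_min g1pos g2pos.
have gap1 : forall i i', i != i' -> g <= `|lam i - lam i'|.
  move=> i i' ne; rewrite ge_min; apply/orP; left.
  by have := Hg1 (i, i'); rewrite /F1 /= ne.
have gap2 : forall i, lam i != 0 -> g <= lam i.
  move=> i ne; rewrite ge_min; apply/orP; right.
  by have := Hg2 i; rewrite /F2 /= (negbTE ne).
pose d := Num.min (Num.min d0 1) (g / (2 * Dm + 1)).
have dpos : 0 < d by apply: R_dpos.
have dprop : forall e : R, `|e| < d -> [/\ `|e| < d0, `|e| <= 1 & Dm * `|e| + Dm * `|e| < g].
  by move=> e he; exact: (R_dprop gpos Dm0 he).
have Dmle : forall e : R, 0 <= Dm * `|e| by move=> e; rewrite mulr_ge0.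
have match_at : forall e : R, `|e| < d -> exists sg : 'I_N -> 'I_N,
   [/\ injective sg, (forall i, `|lamE e (sg i) - (lam i + e * dl i)| <= K * e ^+ 2),
       (forall i, lam i = 0 -> lamE e (sg i) = 0) &
       h e = - \sum_i xlog2x (lamE e (sg i) / c)].
  move=> e he; case: (dprop e he) => he0 he1 heg.
  case: (Hd0 e he0) => inj eigs.
  pose A : 'I_N -> 'I_N -> R := fun k l => Lf k l + e * Df k l.
  have Aent : forall k l, (laplacian R adj + e *: edge_pert R add p q) k l = A k l.
    by move=> k l; rewrite /A /Lf /Df !mxE.
  have Asym : forall k l, A k l = A l k by move=> k l; rewrite /A Lsym Dsym.
  have ex_u : forall j, exists uj : 'I_N -> R,
      (forall l, appm A uj l = lamE e j * uj l) /\ exists k, uj k != 0.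
    move=> j; case/eigenvalueP: (eigs j) => w Hw wnz.
    exists (fun k => w ord0 k); split.
      move=> l; have := congr1 (fun m : 'rV_N => m ord0 l) Hw.
      rewrite /= [in X in X = _ -> _]mxE [in X in _ = X -> _]mxE => <-.
      by rewrite /appm; apply: eq_bigr => k _; rewrite Aent Asym mulrC.
    case: (pselect (exists k, w ord0 k != 0)) => // H; exfalso.
    apply: (negP wnz); apply/eqP/matrixP => i k; rewrite ord1 mxE.
    by apply/eqP/negPn/negP => ne; apply: H; exists k.
  case: (choice ex_u) => u Hu.
  have eig : forall j l, appm A (u j) l = lamE e j * u j l by move=> j; exact: (Hu j).1.
  have unz : forall j, exists k, u j k != 0 by move=> j; exact: (Hu j).2.
  have ex_s := HK e (lamE e) inj u eig unz.
  case: (choice ex_s) => sg Hsg.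
  have close : forall i, `|lamE e (sg i) - lam i| <= Dm * `|e|.
    by move=> i; exact: (R_close he1 K0 (Hsg i) (dlDm i)).
  have sginj : injective sg.
    move=> i i' E; case: (eqVneq i i') => // ne; exfalso.
    have G := gap1 _ _ ne.
    have X : `|lam i - lam i'| <= Dm * `|e| + Dm * `|e|.
      apply: (le_trans (ler_distD (lamE e (sg i)) (lam i) (lam i'))).
      rewrite distrC; apply: lerD; first exact: close.
      rewrite E; exact: close.
    by have := le_lt_trans (le_trans G X) heg; rewrite ltxx.
  exists sg; split => //.
  - move=> i li0.
    pose one := fun _ : 'I_N => 1 : R.
    case: (near_eig Asym inj eig unz p one 0) => j Hj.
    have r0 : forall k, appm A one k - 0 * one k = 0.
      move=> k; rewrite mul0r subr0.
      have -> : appm A one k = appm Lf one k + e * appm Df one k.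
        by rewrite /appm mulr_sumr -big_split; apply: eq_bigr => l _; rewrite /A mulrDl mulrA.
      by rewrite lap_ones pert_ones // mulr0 addr0.
    have : dotv (fun k => appm A one k - 0 * one k) (fun k => appm A one k - 0 * one k) = 0.
      by rewrite /dotv big1 // => k _; rewrite r0 mulr0.
    move=> rr; rewrite rr in Hj.
    have oo : dotv one one = N%:R.
      by rewrite /dotv (eq_bigr (fun _ => 1)) ?sumr_const ?card_ord // => k _; rewrite mulr1.
    rewrite oo in Hj.
    have N0 : 0 < N%:R :> R by rewrite ltr0n; apply: (leq_ltn_trans (leq0n p) (ltn_ord p)).
    have aj0 := R_sq0 N0 Hj.
    have sgf := f_finv sginj j.
    set i' := finv sg j in sgf.
    have li'0 : lam i' = 0.
      apply/eqP; apply: contraT => ne.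
      have G := gap2 _ ne.
      have C := close i'; rewrite sgf aj0 sub0r normrN ger0_norm ?lam0 // in C.
      have : Dm * `|e| < g.
        by apply: le_lt_trans heg; rewrite lerDl.
      move=> hh; move: (le_lt_trans (le_trans G C) hh); by rewrite ltxx.
    have ii : i' = i by apply: laminj; rewrite li'0 li0.
    by rewrite -ii sgf.
  - by rewrite /h /vn_entropy (reindex_inj sginj).
pose Ci := fun i => (Dm ^+ 2 / (c * lam i) + K * `|ln (lam i / c) + 1| / c) / ln 2.
have Ci0 : forall i, 0 <= Ci i.
  move=> i; rewrite /Ci divr_ge0 ?(ltW ln2) // addr_ge0 //.
    by rewrite divr_ge0 ?sqr_ge0 // mulr_ge0 ?(ltW c0).
  by rewrite divr_ge0 ?(ltW c0) // mulr_ge0.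
exists (\sum_i Ci i), d => // eps Heps.
case: (dprop eps Heps) => he0 he1 heg.
have [sg [sginj Hsg Hz hE]] := match_at eps Heps.
have [sg0 [_ Hsg0 _ h0E]] : exists sg0 : 'I_N -> 'I_N,
   [/\ injective sg0, (forall i, `|lamE 0 (sg0 i) - (lam i + 0 * dl i)| <= K * 0 ^+ 2),
       (forall i, lam i = 0 -> lamE 0 (sg0 i) = 0) &
       h 0 = - \sum_i xlog2x (lamE 0 (sg0 i) / c)].
  by apply: match_at; rewrite normr0.
have ex0 : forall i, lamE 0 (sg0 i) = lam i.
  move=> i; have := Hsg0 i; rewrite expr0n /= mulr0 mul0r addr0.
  by rewrite normr_le0 subr_eq0 => /eqP.
rewrite hE h0E.
have -> : \sum_i xlog2x (lamE 0 (sg0 i) / c) = \sum_i xlog2x (lam i / c).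
  by apply: eq_bigr => i _; rewrite ex0.
pose T := fun i => xlog2x (lamE eps (sg i) / c) - xlog2x (lam i / c)
   - eps * (c^-1 * (dl i * (log2 (lam i / c) + (ln (2:R))^-1))).
have -> : - (\sum_i xlog2x (lamE eps (sg i) / c)) - - (\sum_i xlog2x (lam i / c)) - eps * h'0
    = - \sum_i T i.
  rewrite /T /h'0 -/c !sumrB.
  under [X in _ = - (_ - _ - X)]eq_bigr do rewrite dlE.
  by rewrite -!mulr_sumr R_alg.
rewrite normrN; apply: (le_trans (ler_norm_sum _ _ _)).
rewrite mulr_suml; apply: ler_sum => i _.
case: (eqVneq (lam i) 0) => [l0|ln0].
  have dl0 : dl i = 0.
    rewrite dlE (@zero_vec R N adj lam v sy laminj veig' vorth' i l0 p q).
    by rewrite subrr expr0n /= mulr0.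
  rewrite /T Hz // dl0 l0 subrr mul0r !mulr0 subr0 normr0.
  by rewrite mulr_ge0 ?Ci0 ?sqr_ge0.
have lpos : 0 < lam i by rewrite lt_neqAle eq_sym ln0 lam0.
have close := R_close he1 K0 (Hsg i) (dlDm i).
have apos : 0 < lamE eps (sg i).
  apply: (R_pos close); apply: (lt_le_trans _ (gap2 _ ln0)).
  by apply: le_lt_trans heg; rewrite lerDl.
exact: (term_bound c0 lpos apos K0 (Hsg i) close).
Qed.
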